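(* Let $\nu>0$, $C_0,C_1>0$, and let $f_i:[0,1]\to[0,1]$, $i\in\mathbb N$, be orientation-preserving $C^{2+\nu}$ diffeomorphisms with $f_i(0)=0$, $f_i(1)=1$, $|n_{f_i}(x)-n_{f_i}(y)|\le C_0|x-y|^\nu$ for all $x,y\in[0,1]$, and $\sup_{[0,1]}|n_{f_i}|\le C_1$, for all $i$. Then for every $C_2>0$ there exists $C_3>0$ such that the following holds: for every $n$ and every choice of intervals $[a_i,b_i]\subset[0,1]$, $1\le i\le n$, with $\delta_i=b_i-a_i>0$ and $\sum_{i=1}^n\delta_i\le C_2$, $$d_{C^2}\big(\tilde f_1^n,M_1^n\big)\le C_3\big(\max_{1\le j\le n}\delta_j\big)^\nu,$$ where $\tilde f_i=\mathcal Z_{[a_i,b_i]}(f_i)$, $M_i=M_{N_{\tilde f_i}}$, $\tilde f_1^n=\tilde f_n\circ\cdots\circ\tilde f_1$ and $M_1^n=M_n\circ\cdots\circ M_1$.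
   Context: For a $C^2$ orientation-preserving diffeomorphism $g$ of an interval, its nonlinearity is $n_g=D^2g/Dg$; for $g$ defined on $[0,1]$, $N_g=\int_0^1 n_g(x)\,dx$. Zoom: for an interval $H$ and a diffeomorphism $g$ on $H$, $\mathcal Z_H(g)=A_1\circ g\circ A_2:[0,1]\to[0,1]$, where $A_2$ is the orientation-preserving affine map sending $[0,1]$ onto $H$ and $A_1$ the orientation-preserving affine map sending $g(H)$ onto $[0,1]$. For $N\in\mathbb R$, $M_N(x)=\dfrac{xe^{-N/2}}{1+x(e^{-N/2}-1)}$ on $[0,1]$. $d_{C^2}(f,g)=\sum_{i=0}^2\sup_{x\in[0,1]}|D^if(x)-D^ig(x)|$. *)

(* Defs.v *)
From Stdlib Require Import Reals Lra.
Open Scope R_scope.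

(* t^nu for t >= 0, with the convention 0^nu = 0 (Stdlib's Rpower 0 nu = 1). *)
Definition hpow (t nu : R) : R := if Rle_dec t 0 then 0 else Rpower t nu.

Definition deriv01 (f f' : R -> R) : Prop :=
  forall x, 0 <= x <= 1 ->
    limit1_in (fun y => (f y - f x) / (y - x))
              (fun y => 0 <= y <= 1 /\ y <> x) (f' x) x.

(* nonlinearity n_g = D^2 g / D g, given Dg = g1 and D^2 g = g2 *)
Definition nonlin (g1 g2 : R -> R) : R -> R := fun x => g2 x / g1 x.

(* Zoom of an orientation-preserving g on H = [a,b]:
   A1 o g o A2 with A2(x) = a + (b-a) x and A1 the increasing affine map
   sending g(H) = [g a, g b] onto [0,1]. *)
Definition A2 (a b : R) (x : R) : R := a + (b - a) * x.
Definition A1 (ga gb : R) (y : R) : R := (y - ga) / (gb - ga).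
Definition zoom (a b : R) (g : R -> R) : R -> R :=
  fun x => A1 (g a) (g b) (g (A2 a b x)).

Definition Mob (N : R) (x : R) : R :=
  x * exp (- N / 2) / (1 + x * (exp (- N / 2) - 1)).

Fixpoint iter_comp (g : nat -> R -> R) (n : nat) : R -> R :=
  match n with
  | O => fun x => x
  | S k => fun x => g (S k) (iter_comp g k x)
  end.

(* max_{1<=j<=n} d j  (for n >= 1 and positive d) *)
Fixpoint maxseq (d : nat -> R) (n : nat) : R :=
  match n with
  | O => 0
  | S k => Rmax (maxseq d k) (d (S k))
  end.

Definition sup01 (h : R -> R) (s : R) : Prop :=
  is_lub (fun y => exists x, 0 <= x <= 1 /\ y = Rabs (h x)) s.

(* d_{C^2}(F,G) = d, where F1,F2 (resp. G1,G2) are the first and second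
   derivatives of F (resp. G) on [0,1]. *)
Definition dC2 (F F1 F2 G G1 G2 : R -> R) (d : R) : Prop :=
  exists s0 s1 s2,
    sup01 (fun x => F x - G x) s0 /\
    sup01 (fun x => F1 x - G1 x) s1 /\
    sup01 (fun x => F2 x - G2 x) s2 /\
    d = s0 + s1 + s2.

(* Main.v *)
From Pilot Require Import Defs.
From Stdlib Require Import Reals Lra Psatz.
From Coquelicot Require Import Coquelicot.
Open Scope R_scope.

Definition I01 (x : R) : Prop := 0 <= x <= 1.

Definition DvOn (S : R -> Prop) (f f' : R -> R) : Prop :=
  forall x, S x -> forall eps, 0 < eps -> exists eta, 0 < eta /\
    forall y, S y -> Rabs (y - x) < eta ->
      Rabs (f y - f x - f' x * (y - x)) <= eps * Rabs (y - x).

Lemma deriv01_Dv f f' : deriv01 f f' -> DvOn I01 f f'.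
Proof.
  intros H x Hx eps He.
  destruct (H x Hx eps He) as [alp [Ha Hl]].
  exists alp; split; auto.
  intros y Hy Hyx.
  destruct (Req_dec y x) as [->|Hne].
  { replace (x - x) with 0 by ring. rewrite Rabs_R0. 
    replace (f x - f x - f' x * 0) with 0 by ring. rewrite Rabs_R0; lra. }
  assert (Hq := Hl y (conj (conj Hy Hne) Hyx)).
  simpl in Hq. unfold Rdist in Hq.
  assert (Hyx0 : y - x <> 0) by lra.
  replace (f y - f x - f' x * (y - x)) with (((f y - f x)/(y-x) - f' x) * (y - x))
    by (field; auto).
  rewrite Rabs_mult. apply Rmult_le_compat_r. apply Rabs_pos. lra.
Qed.

Lemma lim_Dv S f f' : (forall x, S x -> derivable_pt_lim f x (f' x)) -> DvOn S f f'.
Proof.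
  intros H x Hx eps He.
  destruct (H x Hx eps He) as [[d Hd] Hl]. simpl in Hl.
  exists d; split; auto.
  intros y Hy Hyx.
  destruct (Req_dec y x) as [->|Hne].
  { replace (x - x) with 0 by ring. rewrite Rabs_R0. 
    replace (f x - f x - f' x * 0) with 0 by ring. rewrite Rabs_R0; lra. }
  assert (Hyx0 : y - x <> 0) by lra.
  assert (Hq := Hl (y - x) Hyx0 Hyx).
  replace (x + (y - x)) with y in Hq by ring.
  replace (f y - f x - f' x * (y - x)) with (((f y - f x)/(y-x) - f' x) * (y - x))
    by (field; auto).
  rewrite Rabs_mult. apply Rmult_le_compat_r. apply Rabs_pos. lra.
Qed.

Lemma Dv_ext S f g f' g' : DvOn S f f' -> (forall x, S x -> f x = g x) ->
  (forall x, S x -> f' x = g' x) -> DvOn S g g'.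
Proof.
  intros H Hfg Hd x Hx eps He. destruct (H x Hx eps He) as [eta [He' Hl]].
  exists eta; split; auto. intros y Hy Hyx.
  rewrite <- (Hfg y Hy), <- (Hfg x Hx), <- (Hd x Hx). auto.
Qed.

Lemma Dv_cont S f f' : DvOn S f f' -> forall x, S x -> forall eps, 0 < eps ->
  exists eta, 0 < eta /\ forall y, S y -> Rabs (y - x) < eta -> Rabs (f y - f x) <= eps.
Proof.
  intros H x Hx eps He.
  destruct (H x Hx 1 ltac:(lra)) as [eta [Heta Hl]].
  exists (Rmin eta (eps / (Rabs (f' x) + 1))). split.
  { apply Rmin_pos; auto. apply Rdiv_lt_0_compat; auto. pose proof (Rabs_pos (f' x)); lra. }
  intros y Hy Hyx.
  assert (H1 : Rabs (y - x) < eta) by (eapply Rlt_le_trans; [exact Hyx|apply Rmin_l]).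
  assert (H2 : Rabs (y - x) < eps / (Rabs (f' x) + 1)) by (eapply Rlt_le_trans; [exact Hyx|apply Rmin_r]).
  specialize (Hl y Hy H1).
  pose proof (Rabs_pos (f' x)).
  assert (H3: Rabs (y-x) * (Rabs (f' x) + 1) < eps).
  { apply (Rmult_lt_compat_r (Rabs (f' x) + 1)) in H2; [|lra].
    unfold Rdiv in H2. rewrite Rmult_assoc, Rinv_l in H2; lra. }
  replace (f y - f x) with ((f y - f x - f' x * (y - x)) + f' x * (y - x)) by ring.
  eapply Rle_trans. apply Rabs_triang. rewrite Rabs_mult. nra.
Qed.

Lemma Dv_comp S T g g' h h' : DvOn S g g' -> DvOn T h h' -> (forall x, S x -> T (g x)) ->
  DvOn S (fun x => h (g x)) (fun x => h' (g x) * g' x).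
Proof.
  intros Hg Hh HST x Hx eps He.
  set (u := g x).
  set (a := Rabs (g' x)). set (b := Rabs (h' u)).
  assert (Ha : 0 <= a) by apply Rabs_pos. assert (Hb : 0 <= b) by apply Rabs_pos.
  destruct (Hh u (HST x Hx) (eps / (2 * (a + 1)))) as [e1 [He1 H1]].
  { apply Rdiv_lt_0_compat; lra. }
  destruct (Hg x Hx (Rmin 1 (eps / (2 * (b + 1))))) as [e2 [He2 H2]].
  { apply Rmin_pos; [lra|]. apply Rdiv_lt_0_compat; lra. }
  exists (Rmin e2 (e1 / (a + 1))). split.
  { apply Rmin_pos; auto. apply Rdiv_lt_0_compat; lra. }
  intros y Hy Hyx.
  assert (Hy2 : Rabs (y - x) < e2) by (eapply Rlt_le_trans; [exact Hyx|apply Rmin_l]).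
  assert (Hy1 : Rabs (y - x) < e1 / (a + 1)) by (eapply Rlt_le_trans; [exact Hyx|apply Rmin_r]).
  specialize (H2 y Hy Hy2).
  set (r := Rabs (y - x)) in *.
  assert (Hr : 0 <= r) by apply Rabs_pos.
  set (m := Rmin 1 (eps / (2 * (b + 1)))) in *.
  assert (Hm1 : m <= 1) by apply Rmin_l.
  assert (Hm2 : m <= eps / (2 * (b + 1))) by apply Rmin_r.
  assert (Hm0 : 0 <= m) by (apply Rmin_glb; [lra| left; apply Rdiv_lt_0_compat; lra]).
  assert (Hgu : Rabs (g y - u) <= (a + 1) * r).
  { replace (g y - u) with ((g y - g x - g' x * (y - x)) + g' x * (y - x)) by (unfold u; ring).
    eapply Rle_trans. apply Rabs_triang. rewrite Rabs_mult. fold a r. nra. }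
  assert (Hgu2 : Rabs (g y - u) < e1).
  { eapply Rle_lt_trans. exact Hgu.
    apply (Rmult_lt_compat_l (a+1)) in Hy1; [|lra].
    replace ((a + 1) * (e1 / (a + 1))) with e1 in Hy1 by (field; lra). lra. }
  specialize (H1 (g y) (HST y Hy) Hgu2).
  change (Rabs (h (g y) - h u - h' u * g' x * (y - x)) <= eps * r).
  replace (h (g y) - h u - h' u * g' x * (y - x)) with
     ((h (g y) - h u - h' u * (g y - u)) + h' u * (g y - g x - g' x * (y - x))) by (unfold u; ring).
  eapply Rle_trans. apply Rabs_triang. rewrite Rabs_mult. fold b.
  assert (E1 : eps / (2 * (a + 1)) * Rabs (g y - u) <= eps / 2 * r).
  { replace (eps / 2 * r) with (eps / (2 * (a + 1)) * ((a + 1) * r)) by (field; lra).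
    apply Rmult_le_compat_l; auto. left; apply Rdiv_lt_0_compat; lra. }
  assert (E2 : b * Rabs (g y - g x - g' x * (y - x)) <= eps / 2 * r).
  { eapply Rle_trans. apply Rmult_le_compat_l; [exact Hb| exact H2].
    assert (b * m <= eps / 2).
    { apply Rle_trans with (b * (eps / (2 * (b + 1)))). apply Rmult_le_compat_l; auto.
      replace (b * (eps / (2 * (b + 1)))) with (eps / 2 * (b / (b+1))) by (field; lra).
      assert (b / (b+1) <= 1). { apply Rmult_le_reg_r with (b+1); [lra|].
        unfold Rdiv; rewrite Rmult_assoc, Rinv_l; lra. }
      nra. }
    nra. }
  lra.
Qed.
Lemma Dv_plus S f f' g g' : DvOn S f f' -> DvOn S g g' ->
  DvOn S (fun x => f x + g x) (fun x => f' x + g' x).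
Proof.
  intros Hf Hg x Hx eps He.
  destruct (Hf x Hx (eps/2) ltac:(lra)) as [e1 [He1 H1]].
  destruct (Hg x Hx (eps/2) ltac:(lra)) as [e2 [He2 H2]].
  exists (Rmin e1 e2); split. apply Rmin_pos; auto.
  intros y Hy Hyx.
  assert (Hy1 : Rabs (y - x) < e1) by (eapply Rlt_le_trans; [exact Hyx|apply Rmin_l]).
  assert (Hy2 : Rabs (y - x) < e2) by (eapply Rlt_le_trans; [exact Hyx|apply Rmin_r]).
  specialize (H1 y Hy Hy1). specialize (H2 y Hy Hy2).
  replace (f y + g y - (f x + g x) - (f' x + g' x) * (y - x)) with
    ((f y - f x - f' x * (y - x)) + (g y - g x - g' x * (y - x))) by ring.
  eapply Rle_trans. apply Rabs_triang. lra.
Qed.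

Lemma Dv_full S (h h' : R -> R) : (forall x, derivable_pt_lim h x (h' x)) -> DvOn S h h'.
Proof. intros H. apply lim_Dv. auto. Qed.

Lemma Dv_scal S f f' c : DvOn S f f' -> DvOn S (fun x => c * f x) (fun x => c * f' x).
Proof.
  intros Hf.
  assert (H := Dv_comp S (fun _ => True) f f' (fun y => c * y) (fun _ => c) Hf).
  eapply Dv_ext. apply H.
  - apply Dv_full. intros y. 
    apply is_derive_Reals. auto_derive; auto; ring.
  - auto.
  - auto.
  - auto.
Qed.

Lemma Dv_sq S f f' : DvOn S f f' -> DvOn S (fun x => f x * f x) (fun x => 2 * f x * f' x).
Proof.
  intros Hf.
  assert (H := Dv_comp S (fun _ => True) f f' (fun y => y * y) (fun y => 2 * y) Hf).
  eapply Dv_ext. apply H.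
  - apply Dv_full. intros y.
    apply is_derive_Reals. auto_derive; auto; ring.
  - auto.
  - auto.
  - intros; simpl; ring.
Qed.

Lemma Dv_mult S f f' g g' : DvOn S f f' -> DvOn S g g' ->
  DvOn S (fun x => f x * g x) (fun x => f' x * g x + f x * g' x).
Proof.
  intros Hf Hg.
  assert (Hs := Dv_plus S f f' g g' Hf Hg).
  assert (Hd := Dv_plus S f f' _ _ Hf (Dv_scal S g g' (-1) Hg)).
  assert (H1 := Dv_sq S _ _ Hs). assert (H2 := Dv_sq S _ _ Hd).
  assert (H := Dv_plus S _ _ _ _ (Dv_scal S _ _ (/4) H1) (Dv_scal S _ _ (-/4) H2)).
  eapply Dv_ext. apply H.
  - intros; simpl; field.
  - intros; simpl; field.
Qed.

Lemma Dv_const S c : DvOn S (fun _ => c) (fun _ => 0).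
Proof. apply Dv_full. intros; apply derivable_pt_lim_const. Qed.

Lemma Dv_id S : DvOn S (fun x => x) (fun _ => 1).
Proof. apply Dv_full. intros; apply derivable_pt_lim_id. Qed.

Lemma Dv_unique f f1 f2 : DvOn I01 f f1 -> DvOn I01 f f2 -> forall x, I01 x -> f1 x = f2 x.
Proof.
  intros H1 H2 x Hx.
  destruct (Req_dec (f1 x) (f2 x)) as [|Hne]; auto. exfalso.
  set (d := Rabs (f1 x - f2 x)).
  assert (Hd : 0 < d) by (apply Rabs_pos_lt; lra).
  destruct (H1 x Hx (d/4) ltac:(lra)) as [e1 [He1 K1]].
  destruct (H2 x Hx (d/4) ltac:(lra)) as [e2 [He2 K2]].
  set (s := Rmin (Rmin e1 e2) 1 / 2).
  assert (Hs0 : 0 < s) by (unfold s; apply Rdiv_lt_0_compat; [repeat apply Rmin_pos|]; lra).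
  assert (Hs1 : s < e1) by (unfold s; pose proof (Rmin_l (Rmin e1 e2) 1); pose proof (Rmin_l e1 e2); lra).
  assert (Hs2 : s < e2) by (unfold s; pose proof (Rmin_l (Rmin e1 e2) 1); pose proof (Rmin_r e1 e2); lra).
  assert (Hs3 : s <= 1/2) by (unfold s; pose proof (Rmin_r (Rmin e1 e2) 1); lra).
  assert (Hy : exists y, I01 y /\ Rabs (y - x) = s).
  { destruct (Rle_dec x (1/2)).
    - exists (x + s). unfold I01 in *. split. lra. replace (x + s - x) with s by ring. apply Rabs_pos_eq; lra.
    - exists (x - s). unfold I01 in *. split. lra. replace (x - s - x) with (- s) by ring.
      rewrite Rabs_Ropp. apply Rabs_pos_eq; lra. }
  destruct Hy as [y [Hy Hys]].
  specialize (K1 y Hy ltac:(lra)). specialize (K2 y Hy ltac:(lra)).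
  assert (Rabs ((f1 x - f2 x) * (y - x)) <= d / 2 * s).
  { replace ((f1 x - f2 x) * (y - x)) with
      (- (f y - f x - f1 x * (y - x)) + (f y - f x - f2 x * (y - x))) by ring.
    eapply Rle_trans. apply Rabs_triang. rewrite Rabs_Ropp. rewrite Hys in K1, K2. lra. }
  rewrite Rabs_mult, Hys in H. fold d in H. nra.
Qed.

Definition cl (t : R) : R := Rmax 0 (Rmin 1 t).

Lemma cl_I01 t : I01 (cl t).
Proof. unfold cl, I01, Rmax, Rmin. repeat destruct Rle_dec; lra. Qed.
Lemma cl_id t : I01 t -> cl t = t.
Proof. unfold cl, I01, Rmax, Rmin. intros; repeat destruct Rle_dec; lra. Qed.
Lemma cl_lip t s : I01 s -> Rabs (cl t - s) <= Rabs (t - s).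
Proof. unfold cl, I01, Rmax, Rmin. intros. repeat destruct Rle_dec;
  unfold Rabs; repeat destruct Rcase_abs; lra. Qed.

Lemma MVT01 f f' x y : DvOn I01 f f' -> I01 x -> I01 y -> x < y ->
  exists c, x <= c <= y /\ f y - f x = f' c * (y - x).
Proof.
  intros Hf Hx Hy Hxy.
  destruct (MVT_gen (fun t => f (cl t)) x y f') as [c [Hc Heq]].
  - intros c Hc. rewrite Rmin_left in Hc by lra. rewrite Rmax_right in Hc by lra.
    apply is_derive_Reals. intros eps He.
    destruct (Hf c ltac:(unfold I01 in *; lra) (eps/2) ltac:(lra)) as [e [He' K]].
    assert (Hpos : 0 < Rmin e (Rmin c (1 - c))).
    { apply Rmin_pos; auto. apply Rmin_pos; unfold I01 in *; lra. }
    exists (mkposreal _ Hpos). simpl. intros h Hh0 Hh.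
    assert (h1 : Rabs h < e) by (eapply Rlt_le_trans; [exact Hh|apply Rmin_l]).
    assert (h2 : Rabs h < Rmin c (1 - c)) by (eapply Rlt_le_trans; [exact Hh|apply Rmin_r]).
    assert (h3 : Rabs h < c) by (eapply Rlt_le_trans; [exact h2|apply Rmin_l]).
    assert (h4 : Rabs h < 1 - c) by (eapply Rlt_le_trans; [exact h2|apply Rmin_r]).
    assert (Hch : I01 (c + h)) by (unfold I01; unfold Rabs in *; destruct Rcase_abs; lra).
    rewrite (cl_id (c+h) Hch), (cl_id c ltac:(unfold I01 in *; lra)).
    specialize (K (c + h) Hch ltac:(replace (c + h - c) with h by ring; auto)).
    replace (c + h - c) with h in K by ring.
    replace ((f (c + h) - f c) / h - f' c) with ((f (c + h) - f c - f' c * h) / h) by (field; auto).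
    unfold Rdiv. rewrite Rabs_mult, Rabs_inv.
    apply Rle_lt_trans with (eps / 2).
    + apply Rmult_le_reg_r with (Rabs h). apply Rabs_pos_lt; auto.
      rewrite Rmult_assoc, Rinv_l. lra. apply Rabs_no_R0; auto.
    + lra.
  - intros t Ht. rewrite Rmin_left in Ht by lra. rewrite Rmax_right in Ht by lra.
    assert (It : I01 t) by (unfold I01 in *; lra).
    intros eps He.
    destruct (Dv_cont _ _ _ Hf t It (eps/2) ltac:(lra)) as [e [He' K]].
    exists e. split. lra. intros z [_ Hz]. simpl in Hz |- *. unfold Rdist in *.
    rewrite (cl_id t It).
    assert (Rabs (cl z - t) < e) by (eapply Rle_lt_trans; [apply cl_lip; auto| auto]).
    specialize (K (cl z) (cl_I01 z) H). lra.
  - rewrite Rmin_left in Hc by lra. rewrite Rmax_right in Hc by lra.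
    exists c. split; auto. rewrite <- (cl_id x Hx), <- (cl_id y Hy) at 1.
    exact Heq.
Qed.

Lemma MVT01_le f f' M x y : DvOn I01 f f' -> I01 x -> I01 y ->
  (forall c, I01 c -> Rabs (f' c) <= M) -> Rabs (f y - f x) <= M * Rabs (y - x).
Proof.
  intros Hf Hx Hy HM.
  destruct (Rtotal_order x y) as [Hlt|[->|Hgt]].
  - destruct (MVT01 f f' x y Hf Hx Hy Hlt) as [c [Hc ->]].
    rewrite Rabs_mult. apply Rmult_le_compat_r. apply Rabs_pos. apply HM. unfold I01 in *; lra.
  - replace (y - y) with 0 by ring. replace (f y - f y) with 0 by ring. rewrite Rabs_R0. lra.
  - destruct (MVT01 f f' y x Hf Hy Hx Hgt) as [c [Hc Hq]].
    rewrite <- Rabs_Ropp. replace (- (f y - f x)) with (f x - f y) by ring. rewrite Hq.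
    rewrite <- (Rabs_Ropp (y - x)). replace (- (y - x)) with (x - y) by ring.
    rewrite Rabs_mult. apply Rmult_le_compat_r. apply Rabs_pos. apply HM. unfold I01 in *; lra.
Qed.

Lemma incr01 f f' x y : DvOn I01 f f' -> (forall c, I01 c -> 0 < f' c) -> I01 x -> I01 y -> x < y -> f x < f y.
Proof.
  intros Hf Hp Hx Hy Hxy. destruct (MVT01 f f' x y Hf Hx Hy Hxy) as [c [Hc Hq]].
  assert (0 < f' c) by (apply Hp; unfold I01 in *; lra). nra.
Qed.

Fixpoint DH (h h1 : nat -> R -> R) (k : nat) (x : R) : R :=
  match k with
  | O => 1
  | S k => h1 (S k) (iter_comp h k x) * DH h h1 k x
  end.

Fixpoint D2H (h h1 h2 : nat -> R -> R) (k : nat) (x : R) : R :=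
  match k with
  | O => 0
  | S k => h2 (S k) (iter_comp h k x) * DH h h1 k x * DH h h1 k x
           + h1 (S k) (iter_comp h k x) * D2H h h1 h2 k x
  end.

Fixpoint ssum (d : nat -> R) (k : nat) : R :=
  match k with O => 0 | S k => ssum d k + d (S k) end.

Definition Fam (h h1 h2 : nat -> R -> R) (d : nat -> R) (L : R) (n : nat) : Prop :=
  forall i, (1 <= i <= n)%nat ->
    DvOn I01 (h i) (h1 i) /\ DvOn I01 (h1 i) (h2 i) /\
    (forall x, I01 x -> 0 < h1 i x) /\ h i 0 = 0 /\ h i 1 = 1 /\
    (forall x, I01 x -> Rabs (h2 i x / h1 i x) <= L * d i).

Lemma map01 h h1 : DvOn I01 h h1 -> (forall x, I01 x -> 0 < h1 x) -> h 0 = 0 -> h 1 = 1 ->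
  forall x, I01 x -> I01 (h x).
Proof.
  intros Hd Hp H0 H1 x Hx. split.
  - destruct (Req_dec x 0) as [->|]. lra. rewrite <- H0. left.
    apply (incr01 h h1); unfold I01 in *; auto; lra.
  - destruct (Req_dec x 1) as [->|]. lra. rewrite <- H1. left.
    apply (incr01 h h1); unfold I01 in *; auto; lra.
Qed.

Lemma Dv_ln_comp g g' : DvOn I01 g g' -> (forall x, I01 x -> 0 < g x) ->
  DvOn I01 (fun x => ln (g x)) (fun x => g' x / g x).
Proof.
  intros Hg Hp.
  assert (H := Dv_comp I01 (fun y => 0 < y) g g' ln (fun y => / y) Hg).
  eapply Dv_ext. apply H.
  - apply lim_Dv. intros; apply derivable_pt_lim_ln; auto.
  - auto.
  - auto.
  - intros; simpl. unfold Rdiv. ring.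
Qed.

Lemma exp_le x y : x <= y -> exp x <= exp y.
Proof. intros [H|H]. left; apply exp_increasing; auto. subst; lra. Qed.

Lemma fam_mono h h1 h2 d L n m : Fam h h1 h2 d L n -> (m <= n)%nat -> Fam h h1 h2 d L m.
Proof. intros H Hm i Hi. apply H. lia. Qed.

Lemma fam_basic h h1 h2 d L n : Fam h h1 h2 d L n ->
  forall k, (k <= n)%nat ->
  (forall x, I01 x -> I01 (iter_comp h k x)) /\ iter_comp h k 0 = 0 /\ iter_comp h k 1 = 1 /\
  DvOn I01 (iter_comp h k) (DH h h1 k) /\ DvOn I01 (DH h h1 k) (D2H h h1 h2 k) /\
  (forall x, I01 x -> 0 < DH h h1 k x).
Proof.
  intros HF k. induction k as [|k IH]; intros Hk.
  - simpl. split; [|split;[|split;[|split;[|split]]]]; intros; auto; try lra.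
    + apply Dv_id.
    + apply Dv_const.
  - destruct (IH ltac:(lia)) as [Hm [H0 [H1 [Hd1 [Hd2 Hp]]]]].
    destruct (HF (S k) ltac:(lia)) as [Ga [Gb [Gc [Gd [Ge Gf]]]]].
    simpl. split; [|split;[|split;[|split;[|split]]]].
    + intros x Hx. apply (map01 (h (S k)) (h1 (S k))); auto.
    + rewrite H0; auto.
    + rewrite H1; auto.
    + apply (Dv_comp I01 I01); auto.
    + assert (Hc := Dv_comp I01 I01 _ _ _ _ Hd1 Gb Hm).
      assert (Hm2 := Dv_mult I01 _ _ _ _ Hc Hd2).
      eapply Dv_ext. apply Hm2. intros; reflexivity. intros; simpl; ring.
    + intros x Hx. apply Rmult_lt_0_compat; auto.
Qed.

Lemma ln_bound h h1 h2 d L n : Fam h h1 h2 d L n -> (forall i, (1 <= i <= n)%nat -> 0 <= d i) ->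
  forall k, (k <= n)%nat -> forall x y, I01 x -> I01 y ->
  Rabs (ln (DH h h1 k x) - ln (DH h h1 k y)) <= L * ssum d k.
Proof.
  intros HF Hd k. induction k as [|k IH]; intros Hk x y Hx Hy.
  - simpl. replace (ln 1 - ln 1) with 0 by ring. rewrite Rabs_R0. lra.
  - destruct (fam_basic h h1 h2 d L n HF k ltac:(lia)) as [Hm [_ [_ [_ [_ Hp]]]]].
    destruct (HF (S k) ltac:(lia)) as [Ga [Gb [Gc [Gd [Ge Gf]]]]].
    simpl. rewrite !ln_mult by auto.
    replace (ln (h1 (S k) (iter_comp h k x)) + ln (DH h h1 k x) -
             (ln (h1 (S k) (iter_comp h k y)) + ln (DH h h1 k y))) with
      ((ln (h1 (S k) (iter_comp h k x)) - ln (h1 (S k) (iter_comp h k y))) +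
       (ln (DH h h1 k x) - ln (DH h h1 k y))) by ring.
    eapply Rle_trans. apply Rabs_triang.
    assert (E := MVT01_le _ _ (L * d (S k)) _ _ (Dv_ln_comp _ _ Gb Gc) (Hm y Hy) (Hm x Hx) Gf).
    specialize (IH ltac:(lia) x y Hx Hy).
    assert (Rabs (iter_comp h k x - iter_comp h k y) <= 1).
    { pose proof (Hm x Hx); pose proof (Hm y Hy). unfold I01 in *. unfold Rabs; destruct Rcase_abs; lra. }
    assert (0 <= L * d (S k)).
    { eapply Rle_trans. apply Rabs_pos. apply (Gf 0). unfold I01; lra. }
    rewrite Rmult_plus_distr_l. nra.
Qed.

Lemma DH_bound h h1 h2 d L n : Fam h h1 h2 d L n -> (forall i, (1 <= i <= n)%nat -> 0 <= d i) ->
  forall k, (k <= n)%nat -> forall x, I01 x -> DH h h1 k x <= exp (L * ssum d k).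
Proof.
  intros HF Hd k Hk x Hx.
  destruct (fam_basic h h1 h2 d L n HF k Hk) as [Hm [H0 [H1 [Hd1 [Hd2 Hp]]]]].
  destruct (MVT01 _ _ 0 1 Hd1) as [c [Hc Hq]]; try (unfold I01; lra).
  rewrite H0, H1 in Hq. assert (Hc1 : DH h h1 k c = 1) by lra.
  assert (Ic : I01 c) by (unfold I01; lra).
  assert (E := ln_bound h h1 h2 d L n HF Hd k Hk x c Hx Ic).
  rewrite Hc1, ln_1, Rminus_0_r in E. rewrite <- (exp_ln (DH h h1 k x)) by auto.
  apply exp_le. eapply Rle_trans. apply RRle_abs. exact E.
Qed.

Lemma nl_bound h h1 h2 d L n : Fam h h1 h2 d L n -> (forall i, (1 <= i <= n)%nat -> 0 <= d i) -> 0 <= L ->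
  forall k, (k <= n)%nat -> forall x, I01 x ->
  Rabs (D2H h h1 h2 k x / DH h h1 k x) <= L * ssum d k * exp (L * ssum d k).
Proof.
  intros HF Hd HL k. induction k as [|k IH]; intros Hk x Hx.
  - simpl. replace (0/1) with 0 by field. rewrite Rabs_R0. lra.
  - destruct (fam_basic h h1 h2 d L n HF k ltac:(lia)) as [Hm [_ [_ [_ [_ Hp]]]]].
    destruct (HF (S k) ltac:(lia)) as [Ga [Gb [Gc [Gd [Ge Gf]]]]].
    assert (Hpk := Hp x Hx). assert (Hg := Gc _ (Hm x Hx)).
    assert (Eq : D2H h h1 h2 (S k) x / DH h h1 (S k) x =
       h2 (S k) (iter_comp h k x) / h1 (S k) (iter_comp h k x) * DH h h1 k x
       + D2H h h1 h2 k x / DH h h1 k x) by (simpl; field; lra).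
    rewrite Eq. eapply Rle_trans. apply Rabs_triang.
    specialize (IH ltac:(lia) x Hx).
    assert (B := DH_bound h h1 h2 d L n HF Hd k ltac:(lia) x Hx).
    assert (Gk := Gf _ (Hm x Hx)).
    assert (0 <= L * d (S k)).
    { eapply Rle_trans. apply Rabs_pos. apply (Gf 0). unfold I01; lra. }
    assert (HS : 0 <= ssum d k) by (clear -Hd Hk; induction k; simpl; [lra| pose proof (Hd (S k) ltac:(lia)); pose proof (IHk ltac:(lia)); lra]).
    assert (0 <= L * ssum d k) by nra.
    assert (exp (L * ssum d k) <= exp (L * ssum d (S k))).
    { simpl. apply exp_le. pose proof (Hd (S k) ltac:(lia)). nra. }
    rewrite Rabs_mult, (Rabs_pos_eq (DH h h1 k x)) by lra.
    simpl in *. set (E0 := exp (L * ssum d k)) in *. set (E1 := exp (L * (ssum d k + d (S k)))) in *.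
    set (a := Rabs (h2 (S k) (iter_comp h k x) / h1 (S k) (iter_comp h k x))) in *.
    assert (0 <= a) by apply Rabs_pos.
    assert (a * DH h h1 k x <= L * d (S k) * E1).
    { apply Rmult_le_compat; try lra. }
    assert (L * ssum d k * E0 <= L * ssum d k * E1) by (apply Rmult_le_compat_l; lra).
    lra.
Qed.

Lemma exp_diff_le u v W : 0 < u -> 0 < v -> u <= W -> v <= W ->
  Rabs (u - v) <= W * Rabs (ln u - ln v).
Proof.
  intros Hu Hv HuW HvW.
  assert (K : forall u v, 0 < u -> 0 < v -> u <= W -> v <= W -> ln u <= ln v ->
            0 <= v - u <= W * (ln v - ln u)).
  { clear. intros u v Hu Hv HuW HvW Hl.
    assert (E := exp_ineq1_le (ln u - ln v)).
    unfold Rminus in E. rewrite exp_plus, exp_Ropp, !exp_ln in E by auto.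
    fold (u / v) in E.
    assert (u / v * v = u) by (field; lra).
    split.
    - assert (u <= v). { rewrite <- (exp_ln u), <- (exp_ln v) by auto. apply exp_le; auto. } lra.
    - apply Rle_trans with (v * (ln v - ln u)).
      + apply Rmult_le_compat_r with (r := v) in E; [|lra]. nra.
      + apply Rmult_le_compat_r; lra. }
  destruct (Rle_dec (ln u) (ln v)).
  - destruct (K u v Hu Hv HuW HvW r).
    rewrite Rabs_minus_sym, (Rabs_minus_sym (ln u)).
    rewrite !Rabs_pos_eq; lra.
  - destruct (K v u Hv Hu HvW HuW ltac:(lra)).
    rewrite !Rabs_pos_eq; lra.
Qed.

Lemma Dv_minus S f f' g g' : DvOn S f f' -> DvOn S g g' ->
  DvOn S (fun x => f x - g x) (fun x => f' x - g' x).
Proof.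
  intros Hf Hg. eapply Dv_ext. apply (Dv_plus _ _ _ _ _ Hf (Dv_scal _ _ _ (-1) Hg)).
  intros; simpl; ring. intros; simpl; ring.
Qed.

Lemma cmp_lemma P P1 P2 Q Q1 Q2 W eps B :
  DvOn I01 P P1 -> DvOn I01 P1 P2 -> DvOn I01 Q Q1 -> DvOn I01 Q1 Q2 ->
  P 0 = Q 0 -> P 1 = Q 1 ->
  (forall x, I01 x -> 0 < P1 x /\ 0 < Q1 x /\ P1 x <= W /\ Q1 x <= W) ->
  (forall x, I01 x -> Rabs (P2 x / P1 x - Q2 x / Q1 x) <= eps) ->
  (forall x, I01 x -> Rabs (Q2 x / Q1 x) <= B) ->
  forall x, I01 x ->
    Rabs (P x - Q x) <= W * eps /\ Rabs (P1 x - Q1 x) <= W * eps /\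
    Rabs (P2 x - Q2 x) <= W * eps + B * (W * eps).
Proof.
  intros HP1 HP2 HQ1 HQ2 H0 H1 Hb He HB.
  assert (HD := Dv_minus _ _ _ _ _ HP1 HQ1).
  destruct (MVT01 _ _ 0 1 HD) as [c [Hc Hq]]; try (unfold I01; lra).
  assert (Ic : I01 c) by (unfold I01; lra).
  assert (Hc1 : P1 c = Q1 c) by (rewrite H0, H1 in Hq; lra).
  assert (HL := Dv_minus _ _ _ _ _ (Dv_ln_comp _ _ HP2 (fun x Hx => proj1 (Hb x Hx)))
                  (Dv_ln_comp _ _ HQ2 (fun x Hx => proj1 (proj2 (Hb x Hx))))).
  assert (C1 : forall x, I01 x -> Rabs (P1 x - Q1 x) <= W * eps).
  { intros x Hx. 
    assert (E := MVT01_le _ _ eps _ _ HL Ic Hx He).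
    cbv beta in E. rewrite Hc1 in E. replace (ln (Q1 c) - ln (Q1 c)) with 0 in E by ring.
    rewrite Rminus_0_r in E.
    assert (Rabs (x - c) <= 1) by (unfold I01 in *; unfold Rabs; destruct Rcase_abs; lra).
    assert (0 <= eps) by (eapply Rle_trans; [apply Rabs_pos| apply (He x Hx)]).
    destruct (Hb x Hx) as [? [? [? ?]]].
    eapply Rle_trans. apply exp_diff_le; eauto.
    apply Rmult_le_compat_l. lra. eapply Rle_trans. exact E. nra. }
  intros x Hx. split; [|split].
  - assert (E := MVT01_le _ _ (W * eps) 0 x HD ltac:(unfold I01; lra) Hx C1).
    cbv beta in E. rewrite H0 in E. replace (Q 0 - Q 0) with 0 in E by ring. rewrite Rminus_0_r, Rminus_0_r in E.
    assert (Rabs x <= 1) by (unfold I01 in *; unfold Rabs; destruct Rcase_abs; lra).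
    assert (0 <= W * eps) by (eapply Rle_trans; [apply Rabs_pos| apply (C1 x Hx)]).
    nra.
  - auto.
  - destruct (Hb x Hx) as [? [? [? ?]]].
    replace (P2 x - Q2 x) with ((P2 x / P1 x - Q2 x / Q1 x) * P1 x + (Q2 x / Q1 x) * (P1 x - Q1 x))
      by (field; lra).
    eapply Rle_trans. apply Rabs_triang. rewrite !Rabs_mult.
    rewrite (Rabs_pos_eq (P1 x)) by lra.
    assert (E1 := He x Hx). assert (E2 := HB x Hx). assert (E3 := C1 x Hx).
    pose proof (Rabs_pos (P2 x / P1 x - Q2 x / Q1 x)).
    pose proof (Rabs_pos (Q2 x / Q1 x)). pose proof (Rabs_pos (P1 x - Q1 x)).
    apply Rplus_le_compat.
    + rewrite Rmult_comm. apply Rmult_le_compat; lra.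
    + apply Rmult_le_compat; lra.
Qed.

Definition M1 (N x : R) : R := exp (- N / 2) / ((1 + x * (exp (- N / 2) - 1)) ^ 2).
Definition M2 (N x : R) : R := -2 * (exp (- N / 2) - 1) * exp (- N / 2) / ((1 + x * (exp (- N / 2) - 1)) ^ 3).

Lemma Mden_pos N x : I01 x -> exp (- Rabs (N/2)) <= 1 + x * (exp (- N / 2) - 1).
Proof.
  intros Hx. set (l := exp (- N / 2)).
  assert (H1 : exp (- Rabs (N/2)) <= 1).
  { rewrite <- exp_0. apply exp_le. pose proof (Rabs_pos (N/2)); lra. }
  assert (H2 : exp (- Rabs (N/2)) <= l).
  { unfold l. apply exp_le. unfold Rabs; destruct Rcase_abs; lra. }
  unfold I01 in Hx. nra.
Qed.

Lemma Mob_derive N x : I01 x -> derivable_pt_lim (Mob N) x (M1 N x).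
Proof.
  intros Hx. assert (Hd := Mden_pos N x Hx). pose proof (exp_pos (- Rabs (N/2))).
  apply is_derive_Reals. unfold Mob, M1. auto_derive. lra.
  field. lra.
Qed.

Lemma M1_derive N x : I01 x -> derivable_pt_lim (M1 N) x (M2 N x).
Proof.
  intros Hx. assert (Hd := Mden_pos N x Hx). pose proof (exp_pos (- Rabs (N/2))).
  apply is_derive_Reals. unfold M2, M1. auto_derive.
  apply Rmult_integral_contrapositive; split; [|rewrite Rmult_1_r]; lra.
  field. lra.
Qed.

Lemma exp_bounds t : Rabs (exp t - 1) <= Rabs t * exp (Rabs t) /\
  Rabs (exp t - 1 - t) <= t * t * exp (Rabs t).
Proof.
  assert (HA := exp_ineq1_le t). assert (HB := exp_ineq1_le (- t)).
  assert (HAB : exp t * exp (- t) = 1) by (rewrite <- exp_plus; replace (t + - t) with 0 by ring; apply exp_0).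
  pose proof (exp_pos t). pose proof (exp_pos (- t)).
  destruct (Rle_dec 0 t).
  - rewrite (Rabs_pos_eq t) by lra.
    assert (exp t - 1 <= t * exp t) by nra.
    rewrite !Rabs_pos_eq by nra. split. nra. nra.
  - rewrite (Rabs_left t) by lra.
    assert (1 - exp t <= - t) by nra.
    assert (exp t - 1 - t <= - t * (1 - exp t)) by nra.
    rewrite (Rabs_left (exp t - 1)) by nra. rewrite (Rabs_pos_eq (exp t - 1 - t)) by nra.
    split. nra. nra.
Qed.

Lemma Mob_nl N x : I01 x ->
  Rabs (M2 N x / M1 N x) <= Rabs N * exp (Rabs N) /\
  Rabs (M2 N x / M1 N x - N) <= N * N * exp (Rabs N).
Proof.
  intros Hx. assert (Hd := Mden_pos N x Hx).
  set (t := - N / 2). assert (Ht : Rabs (N/2) = Rabs t) by (unfold t; rewrite <- Rabs_Ropp; f_equal; field).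
  rewrite Ht in Hd.
  set (D := 1 + x * (exp (- N / 2) - 1)) in *.
  pose proof (exp_pos (- Rabs t)). pose proof (exp_pos t).
  assert (Eq : M2 N x / M1 N x = -2 * (exp t - 1) / D).
  { unfold M2, M1. fold t. fold t in D. fold D. field. split; lra. }
  rewrite Eq.
  assert (HN : N = -2 * t) by (unfold t; field).
  assert (HaN : Rabs N = 2 * Rabs t) by (rewrite HN, Rabs_mult; f_equal; unfold Rabs; destruct Rcase_abs; lra).
  destruct (exp_bounds t) as [B1 B2].
  assert (Hinv : / D <= exp (Rabs t)).
  { assert (Hq : / D <= / exp (- Rabs t)) by (apply Rinv_le_contravar; auto).
    rewrite exp_Ropp, Rinv_inv in Hq. exact Hq. }
  assert (HD0 : 0 < D) by lra.
  assert (Hexp2 : exp (Rabs t) * exp (Rabs t) = exp (Rabs N)) by (rewrite <- exp_plus; f_equal; lra).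
  pose proof (exp_pos (Rabs t)). pose proof (Rabs_pos t).
  pose proof (Rabs_pos (exp t - 1)). pose proof (Rabs_pos (exp t - 1 - t)).
  assert (Hid : 0 < / D) by (apply Rinv_0_lt_compat; lra).
  split.
  - unfold Rdiv. rewrite Rabs_mult, Rabs_mult, (Rabs_pos_eq (/ D)) by lra.
    replace (Rabs (-2)) with 2 by (unfold Rabs; destruct Rcase_abs; lra).
    rewrite <- Hexp2, HaN.
    apply Rle_trans with (2 * (Rabs t * exp (Rabs t)) * exp (Rabs t)).
    + apply Rmult_le_compat; try nra.
    + nra.
  - assert (HDdef : D = 1 + x * (exp t - 1)) by reflexivity.
    assert (Eq2 : -2 * (exp t - 1) / D - N = (-2 * (exp t - 1 - t) + (2 * t) * (x * (exp t - 1))) * / D).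
    { rewrite HN. clearbody D. subst D. field. lra. }
    rewrite Eq2.
    rewrite Rabs_mult, (Rabs_pos_eq (/ D)) by lra.
    assert (Hn : Rabs (-2 * (exp t - 1 - t) + 2 * t * (x * (exp t - 1))) <= 4 * (t * t) * exp (Rabs t)).
    { eapply Rle_trans. apply Rabs_triang. rewrite !Rabs_mult.
      replace (Rabs (-2)) with 2 by (unfold Rabs; destruct Rcase_abs; lra).
      rewrite (Rabs_pos_eq x) by (unfold I01 in *; lra).
      assert (Rabs t * Rabs t = t * t) by (rewrite <- Rabs_mult; apply Rabs_pos_eq; nra).
      replace (Rabs 2) with 2 by (unfold Rabs; destruct Rcase_abs; lra).
      assert (x * Rabs (exp t - 1) <= Rabs t * exp (Rabs t)).
      { unfold I01 in Hx. apply Rle_trans with (1 * Rabs (exp t - 1)). apply Rmult_le_compat_r; lra. lra. }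
      assert (Rabs t * (x * Rabs (exp t - 1)) <= Rabs t * (Rabs t * exp (Rabs t))) by (apply Rmult_le_compat_l; lra).
      nra. }
    rewrite <- Hexp2, HN.
    apply Rle_trans with (4 * (t * t) * exp (Rabs t) * exp (Rabs t)).
    + apply Rmult_le_compat; try nra. apply Rabs_pos.
    + nra.
Qed.

Lemma A2_I01 a b x : 0 <= a -> a < b -> b <= 1 -> I01 x -> I01 (A2 a b x).
Proof. unfold A2, I01. intros. nra. Qed.

Lemma zoom_derivs f f1 f2 a b g1 g2 :
  DvOn I01 f f1 -> DvOn I01 f1 f2 -> (forall x, I01 x -> 0 < f1 x) ->
  0 <= a -> a < b -> b <= 1 ->
  DvOn I01 (zoom a b f) g1 -> DvOn I01 g1 g2 ->
  f a < f b /\ zoom a b f 0 = 0 /\ zoom a b f 1 = 1 /\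
  forall x, I01 x -> g1 x = (b - a) / (f b - f a) * f1 (A2 a b x) /\
                   g2 x = (b - a) / (f b - f a) * (f2 (A2 a b x) * (b - a)).
Proof.
  intros Hf Hf1 Hp Ha Hab Hb Hg1 Hg2.
  assert (Hfab : f a < f b) by (apply (incr01 f f1); unfold I01; auto; lra).
  assert (HA : DvOn I01 (A2 a b) (fun _ => b - a)).
  { apply Dv_full. intros y. apply is_derive_Reals. unfold A2. auto_derive; auto; ring. }
  assert (HAm : forall x, I01 x -> I01 (A2 a b x)) by (intros; apply A2_I01; auto).
  set (c := (b - a) / (f b - f a)).
  assert (Hz : DvOn I01 (zoom a b f) (fun x => c * f1 (A2 a b x))).
  { assert (H1 := Dv_comp _ _ _ _ _ _ HA Hf HAm).
    assert (H2 := Dv_comp I01 (fun _ => True) _ _ (Pilot.Defs.A1 (f a) (f b)) (fun _ => / (f b - f a)) H1).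
    eapply Dv_ext. apply H2.
    - apply Dv_full. intros y. apply is_derive_Reals. unfold Pilot.Defs.A1. auto_derive. lra. field. lra.
    - auto.
    - intros; reflexivity.
    - intros; simpl. unfold c. field. lra. }
  assert (Hz2 : DvOn I01 (fun x => c * f1 (A2 a b x)) (fun x => c * (f2 (A2 a b x) * (b - a)))).
  { apply Dv_scal. apply (Dv_comp _ _ _ _ _ _ HA Hf1 HAm). }
  assert (E1 : forall x, I01 x -> g1 x = c * f1 (A2 a b x)) by (intros x Hx; apply (Dv_unique _ _ (fun x => c * f1 (A2 a b x)) Hg1 Hz x Hx)).
  split; [auto|split;[|split]].
  - unfold zoom, Pilot.Defs.A1, A2. replace (a + (b - a) * 0) with a by ring. field. lra.
  - unfold zoom, Pilot.Defs.A1, A2. replace (a + (b - a) * 1) with b by ring. field. lra.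
  - intros x Hx. split. auto.
    apply (Dv_unique g1 g2 (fun x => c * (f2 (A2 a b x) * (b - a))) Hg2); auto.
    eapply Dv_ext. apply Hz2. intros; symmetry; auto. intros; reflexivity.
Qed.

Lemma hpow_le t d nu : 0 <= t -> t <= d -> 0 < d -> 0 < nu -> hpow t nu <= Rpower d nu.
Proof.
  intros Ht Htd Hd Hnu. unfold hpow. destruct Rle_dec.
  - unfold Rpower. left; apply exp_pos.
  - apply Rle_Rpower_l; lra.
Qed.

Lemma zoom_nl f f1 f2 a b g1 g2 C0 C1 nu :
  DvOn I01 f f1 -> DvOn I01 f1 f2 -> (forall x, I01 x -> 0 < f1 x) ->
  0 <= a -> a < b -> b <= 1 -> 0 < nu -> 0 <= C0 ->
  DvOn I01 (zoom a b f) g1 -> DvOn I01 g1 g2 ->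
  (forall x y, I01 x -> I01 y ->
     Rabs (nonlin f1 f2 x - nonlin f1 f2 y) <= C0 * hpow (Rabs (x - y)) nu) ->
  (forall x, I01 x -> Rabs (nonlin f1 f2 x) <= C1) ->
  (forall x, I01 x -> 0 < g1 x) /\ zoom a b f 0 = 0 /\ zoom a b f 1 = 1 /\
  (forall x, I01 x -> Rabs (g2 x / g1 x) <= C1 * (b - a)) /\
  (forall x y, I01 x -> I01 y -> Rabs (g2 x / g1 x - g2 y / g1 y) <= C0 * ((b - a) * Rpower (b - a) nu)).
Proof.
  intros Hf Hf1 Hp Ha Hab Hb Hnu HC0 Hg1 Hg2 Hn Hs.
  destruct (zoom_derivs f f1 f2 a b g1 g2 Hf Hf1 Hp Ha Hab Hb Hg1 Hg2) as [Hfab [H0 [H1 Hd]]].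
  assert (HAm : forall x, I01 x -> I01 (A2 a b x)) by (intros; apply A2_I01; auto).
  assert (Hc : 0 < (b - a) / (f b - f a)) by (apply Rdiv_lt_0_compat; lra).
  assert (Hng : forall x, I01 x -> g2 x / g1 x = (b - a) * nonlin f1 f2 (A2 a b x)).
  { intros x Hx. destruct (Hd x Hx) as [-> ->]. unfold nonlin.
    pose proof (Hp _ (HAm x Hx)). field. lra. }
  split; [|split;[auto|split;[auto|split]]].
  - intros x Hx. destruct (Hd x Hx) as [-> _]. apply Rmult_lt_0_compat; auto.
  - intros x Hx. rewrite Hng by auto. rewrite Rabs_mult, Rabs_pos_eq by lra.
    rewrite Rmult_comm. apply Rmult_le_compat_r. lra. auto.
  - intros x y Hx Hy. rewrite !Hng by auto.
    replace ((b - a) * nonlin f1 f2 (A2 a b x) - (b - a) * nonlin f1 f2 (A2 a b y))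
      with ((b - a) * (nonlin f1 f2 (A2 a b x) - nonlin f1 f2 (A2 a b y))) by ring.
    rewrite Rabs_mult, (Rabs_pos_eq (b - a)) by lra.
    assert (E := Hn _ _ (HAm x Hx) (HAm y Hy)).
    assert (Hd2 : Rabs (A2 a b x - A2 a b y) <= b - a).
    { unfold A2. replace (a + (b - a) * x - (a + (b - a) * y)) with ((b - a) * (x - y)) by ring.
      rewrite Rabs_mult, Rabs_pos_eq by lra.
      assert (Rabs (x - y) <= 1) by (unfold I01 in *; unfold Rabs; destruct Rcase_abs; lra).
      pose proof (Rabs_pos (x - y)). nra. }
    assert (Hh := hpow_le _ (b - a) nu (Rabs_pos _) Hd2 ltac:(lra) Hnu).
    assert (E2 : C0 * hpow (Rabs (A2 a b x - A2 a b y)) nu <= C0 * Rpower (b - a) nu)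
      by (apply Rmult_le_compat_l; auto).
    pose proof (Rabs_pos (nonlin f1 f2 (A2 a b x) - nonlin f1 f2 (A2 a b y))).
    replace (C0 * ((b - a) * Rpower (b - a) nu)) with ((b - a) * (C0 * Rpower (b - a) nu)) by ring.
    apply Rmult_le_compat_l; lra.
Qed.

Lemma N_bound g1 g2 K B Nv (pr : Riemann_integrable (nonlin g1 g2) 0 1) :
  RiemannInt pr = Nv ->
  (forall x, I01 x -> Rabs (g2 x / g1 x) <= B) ->
  (forall x y, I01 x -> I01 y -> Rabs (g2 x / g1 x - g2 y / g1 y) <= K) ->
  Rabs Nv <= B /\ forall x, I01 x -> Rabs (Nv - g2 x / g1 x) <= K.
Proof.
  intros HN HB HK. split.
  - assert (E := RiemannInt_const_bound pr ltac:(lra) (l := - B) (u := B)).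
    rewrite HN in E. unfold nonlin in E.
    destruct E as [E1 E2].
    + intros t Ht. assert (Hb := HB t ltac:(unfold I01; lra)).
      apply Rabs_le_between in Hb || (unfold Rabs in Hb; destruct Rcase_abs in Hb; lra).
      lra.
    + unfold Rabs; destruct Rcase_abs; lra.
  - intros x Hx.
    set (v := g2 x / g1 x).
    assert (E := RiemannInt_const_bound pr ltac:(lra) (l := v - K) (u := v + K)).
    rewrite HN in E. unfold nonlin in E.
    destruct E as [E1 E2].
    + intros t Ht. assert (Hb := HK t x ltac:(unfold I01; lra) Hx). fold v in Hb.
      unfold Rabs in Hb; destruct Rcase_abs in Hb; lra.
    + unfold Rabs; destruct Rcase_abs; lra.
Qed.

Lemma ssum_sum d n : ssum d (S n) = sum_f_R0 (fun k => d (S k)) n.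
Proof. induction n. simpl; ring. rewrite tech5, <- IHn. simpl. ring. Qed.

Lemma ssum_nonneg d n : (forall i, (1 <= i <= n)%nat -> 0 <= d i) -> forall k, (k <= n)%nat -> 0 <= ssum d k.
Proof. intros Hd k. induction k; intros Hk; simpl. lra. pose proof (Hd (S k) ltac:(lia)). pose proof (IHk ltac:(lia)). lra. Qed.

Lemma ssum_mono d n : (forall i, (1 <= i <= n)%nat -> 0 <= d i) -> forall k, (k <= n)%nat -> ssum d k <= ssum d n.
Proof.
  intros Hd k Hk. induction n.
  - replace k with 0%nat by lia. lra.
  - destruct (Nat.eq_dec k (S n)) as [->|Hne]. lra.
    simpl. pose proof (Hd (S n) ltac:(lia)).
    assert (ssum d k <= ssum d n) by (apply IHn; [intros; apply Hd; lia| lia]). lra.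
Qed.

Lemma maxseq_ge d n i : (1 <= i <= n)%nat -> d i <= maxseq d n.
Proof.
  induction n; intros Hi. lia. simpl.
  destruct (Nat.eq_dec i (S n)) as [->|Hne]. apply Rmax_r.
  eapply Rle_trans. apply IHn. lia. apply Rmax_l.
Qed.

Lemma pow_nu_ge d nu : 0 < d -> d <= 1 -> 0 < nu -> nu <= 1 -> d <= Rpower d nu.
Proof.
  intros. unfold Rpower. rewrite <- (exp_ln d) at 1 by auto. apply exp_le.
  assert (ln d <= 0) by (rewrite <- ln_1; apply ln_le; lra). nra.
Qed.

Lemma Mob_basic N : Mob N 0 = 0 /\ Mob N 1 = 1 /\ forall x, I01 x -> 0 < M1 N x.
Proof.
  pose proof (exp_pos (- N / 2)). split; [|split].
  - unfold Mob. rewrite !Rmult_0_l. unfold Rdiv. ring.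
  - unfold Mob. rewrite !Rmult_1_l. field. lra.
  - intros x Hx. assert (Hd := Mden_pos N x Hx). pose proof (exp_pos (- Rabs (N/2))).
    unfold M1. apply Rdiv_lt_0_compat; auto. apply pow_lt. lra.
Qed.

Lemma sup_exists h B : (forall x, I01 x -> Rabs (h x) <= B) -> exists s, sup01 h s /\ s <= B.
Proof.
  intros HB.
  set (E := fun y => exists x, 0 <= x <= 1 /\ y = Rabs (h x)).
  assert (Hb : bound E) by (exists B; intros y [x [Hx ->]]; apply HB; auto).
  assert (Hne : exists y, E y) by (exists (Rabs (h 0)); exists 0; split; [lra|auto]).
  destruct (completeness E Hb Hne) as [s Hs].
  exists s. split. exact Hs. apply Hs. intros y [x [Hx ->]]. apply HB; auto.
Qed.

Theorem proposition2p3
  (nu C0 C1 : R) (f f1 f2 : nat -> R -> R)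
  (Hnu : 0 < nu) (Hnu1 : nu <= 1) (HC0 : 0 < C0) (HC1 : 0 < C1)
  (Hd1 : forall i, deriv01 (f i) (f1 i))
  (Hd2 : forall i, deriv01 (f1 i) (f2 i))
  (Hhol2 : forall i, exists K, forall x y, 0 <= x <= 1 -> 0 <= y <= 1 ->
             Rabs (f2 i x - f2 i y) <= K * hpow (Rabs (x - y)) nu)
  (Hpos : forall i x, 0 <= x <= 1 -> 0 < f1 i x)
  (H0 : forall i, f i 0 = 0) (H1 : forall i, f i 1 = 1)
  (Hn : forall i x y, 0 <= x <= 1 -> 0 <= y <= 1 ->
          Rabs (nonlin (f1 i) (f2 i) x - nonlin (f1 i) (f2 i) y)
            <= C0 * hpow (Rabs (x - y)) nu)
  (Hsup : forall i x, 0 <= x <= 1 -> Rabs (nonlin (f1 i) (f2 i) x) <= C1) :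
  forall C2 : R, 0 < C2 ->
  exists C3 : R, 0 < C3 /\
  forall (n : nat) (a b : nat -> R),
    (1 <= n)%nat ->
    (forall i, (1 <= i <= n)%nat -> 0 <= a i /\ a i < b i /\ b i <= 1) ->
    sum_f_R0 (fun k => b (S k) - a (S k)) (n - 1) <= C2 ->
    forall (g1 g2 : nat -> R -> R),
    (forall i, (1 <= i <= n)%nat -> deriv01 (zoom (a i) (b i) (f i)) (g1 i)) ->
    (forall i, (1 <= i <= n)%nat -> deriv01 (g1 i) (g2 i)) ->
    forall (N : nat -> R),
    (forall i, (1 <= i <= n)%nat ->
       exists pr : Riemann_integrable (nonlin (g1 i) (g2 i)) 0 1,
         RiemannInt pr = N i) ->
    forall (F1 F2 G1 G2 : R -> R),
    deriv01 (iter_comp (fun i => zoom (a i) (b i) (f i)) n) F1 ->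
    deriv01 F1 F2 ->
    deriv01 (iter_comp (fun i => Mob (N i)) n) G1 ->
    deriv01 G1 G2 ->
    exists d,
      dC2 (iter_comp (fun i => zoom (a i) (b i) (f i)) n) F1 F2
          (iter_comp (fun i => Mob (N i)) n) G1 G2 d /\
      d <= C3 * Rpower (maxseq (fun j => b j - a j) n) nu.
Proof.
  intros C2 HC2.
  set (E := exp C1). set (L := C1 * E). set (W := exp (L * C2)).
  set (Ka := C0 + C1 * C1 * E). set (B := L * C2 * W).
  assert (HE : 1 <= E) by (unfold E; rewrite <- exp_0; apply exp_le; lra).
  assert (HL : 0 < L) by (unfold L; nra).
  assert (HW : 1 <= W) by (unfold W; rewrite <- exp_0; apply exp_le; nra).
  assert (HKa : 0 < Ka) by (unfold Ka; nra).
  assert (HB : 0 <= B) by (unfold B; apply Rmult_le_pos; [apply Rmult_le_pos|]; lra).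
  pose proof (exp_pos (L * W * C2)).
  exists ((3 * W + B * W) * (Ka * W * C2 * exp (L * W * C2))). split.
  { apply Rmult_lt_0_compat. nra. repeat apply Rmult_lt_0_compat; lra. }
  intros n a b Hn1 Hab Hsum g1 g2 Hg1 Hg2 N HN F1 F2 G1 G2 HF1 HF2 HG1 HG2.
  set (d := fun j => b j - a j).
  set (m := maxseq d n).
  set (hF := fun i => zoom (a i) (b i) (f i)).
  set (hG := fun i => Mob (N i)).
  set (hG1 := fun i => M1 (N i)).
  set (hG2 := fun i => M2 (N i)).
  assert (Hd : forall i, (1 <= i <= n)%nat -> 0 < d i /\ d i <= 1).
  { intros i Hi. destruct (Hab i Hi) as [? [? ?]]. unfold d. lra. }
  assert (Hd0 : forall i, (1 <= i <= n)%nat -> 0 <= d i) by (intros i Hi; destruct (Hd i Hi); lra).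
  assert (Hm : 0 < m) by (destruct (Hd 1%nat ltac:(lia)); eapply Rlt_le_trans; [eauto|apply maxseq_ge; lia]).
  assert (Hmn : forall i, (1 <= i <= n)%nat -> Rpower (d i) nu <= Rpower m nu).
  { intros i Hi. apply Rle_Rpower_l. lra. split. apply Hd; auto. apply maxseq_ge; auto. }
  assert (HS : ssum d n <= C2).
  { replace n with (S (n - 1)) by lia. rewrite ssum_sum. exact Hsum. }
  assert (HSk : forall k, (k <= n)%nat -> 0 <= ssum d k <= C2).
  { intros k Hk. split. apply (ssum_nonneg d n Hd0 k Hk).
    eapply Rle_trans. apply (ssum_mono d n Hd0 k Hk). auto. }
  assert (Zf : forall i, (1 <= i <= n)%nat ->
    (forall x, I01 x -> 0 < g1 i x) /\ hF i 0 = 0 /\ hF i 1 = 1 /\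
    (forall x, I01 x -> Rabs (g2 i x / g1 i x) <= C1 * d i) /\
    (forall x y, I01 x -> I01 y -> Rabs (g2 i x / g1 i x - g2 i y / g1 i y) <= C0 * (d i * Rpower (d i) nu))).
  { intros i Hi. destruct (Hab i Hi) as [? [? ?]].
    apply (zoom_nl (f i) (f1 i) (f2 i) (a i) (b i) (g1 i) (g2 i) C0 C1 nu);
    first [apply deriv01_Dv; auto | intros; apply Hpos; auto | intros; apply Hn; auto | intros; apply Hsup; auto | lra]. }
  assert (Nf : forall i, (1 <= i <= n)%nat ->
     Rabs (N i) <= C1 * d i /\
     forall x, I01 x -> Rabs (N i - g2 i x / g1 i x) <= C0 * (d i * Rpower (d i) nu)).
  { intros i Hi. destruct (HN i Hi) as [pr Hpr].
    destruct (Zf i Hi) as [_ [_ [_ [Z4 Z5]]]].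
    apply (N_bound (g1 i) (g2 i) _ _ _ pr Hpr Z4 Z5). }
  assert (Mf : forall i, (1 <= i <= n)%nat -> forall x, I01 x ->
     Rabs (hG2 i x / hG1 i x) <= L * d i /\
     Rabs (hG2 i x / hG1 i x - N i) <= C1 * C1 * E * (d i * Rpower (d i) nu)).
  { intros i Hi x Hx. destruct (Nf i Hi) as [N1 _]. destruct (Hd i Hi) as [Hdi Hdi1].
    destruct (Mob_nl (N i) x Hx) as [M1b M2b]. unfold hG1, hG2.
    assert (Hexp : exp (Rabs (N i)) <= E) by (apply exp_le; nra).
    pose proof (Rabs_pos (N i)). pose proof (exp_pos (Rabs (N i))).
    assert (Hpn := pow_nu_ge (d i) nu Hdi Hdi1 Hnu Hnu1).
    split.
    - eapply Rle_trans. exact M1b. unfold L.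
      apply Rle_trans with (C1 * d i * E). apply Rmult_le_compat; lra. nra.
    - eapply Rle_trans. exact M2b.
      assert (N i * N i <= C1 * d i * (C1 * d i)).
      { rewrite <- Rabs_mult_self || idtac. 
        assert (N i * N i = Rabs (N i) * Rabs (N i)) by (rewrite <- Rabs_mult; symmetry; apply Rabs_pos_eq; nra).
        nra. }
      apply Rle_trans with (C1 * d i * (C1 * d i) * E). apply Rmult_le_compat; nra.
      assert (d i * d i <= d i * Rpower (d i) nu) by (apply Rmult_le_compat_l; lra).
      replace (C1 * d i * (C1 * d i) * E) with ((C1 * C1 * E) * (d i * d i)) by ring.
      apply Rmult_le_compat_l; [|lra]. apply Rmult_le_pos; [|lra]. nra. }
  assert (FamF : Fam hF g1 g2 d L n).
  { intros i Hi. destruct (Zf i Hi) as [Z1 [Z2 [Z3 [Z4 _]]]].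
    split; [exact (deriv01_Dv _ _ (Hg1 i Hi))|].
    split; [exact (deriv01_Dv _ _ (Hg2 i Hi))|].
    split; [auto|]. split; [auto|]. split; [auto|].
    intros x Hx. eapply Rle_trans. apply Z4; auto. destruct (Hd i Hi).
      apply Rmult_le_compat_r; [lra|]. unfold L. nra. }
  assert (FamG : Fam hG hG1 hG2 d L n).
  { intros i Hi. destruct (Mob_basic (N i)) as [B1 [B2 B3]].
    split; [apply lim_Dv; intros; apply Mob_derive; auto|].
    split; [apply lim_Dv; intros; apply M1_derive; auto|].
    split; [auto|]. split; [auto|]. split; [auto|].
    intros x Hx; apply (Mf i Hi x Hx). }
  set (DF := DH hF g1). set (D2F := D2H hF g1 g2).
  set (DG := DH hG hG1). set (D2G := D2H hG hG1 hG2).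
  set (mn := Rpower m nu).
  assert (Hmn0 : 0 < mn) by (unfold mn, Rpower; apply exp_pos).
  set (A := Ka * W * mn).
  assert (HA : 0 <= A) by (unfold A; apply Rmult_le_pos; [apply Rmult_le_pos|]; lra).
  assert (WF : forall k, (k <= n)%nat -> forall x, I01 x -> DF k x <= W).
  { intros k Hk x Hx. eapply Rle_trans. apply (DH_bound hF g1 g2 d L n FamF Hd0 k Hk x Hx).
    apply exp_le. destruct (HSk k Hk). apply Rmult_le_compat_l; lra. }
  assert (WG : forall k, (k <= n)%nat -> forall x, I01 x -> DG k x <= W).
  { intros k Hk x Hx. eapply Rle_trans. apply (DH_bound hG hG1 hG2 d L n FamG Hd0 k Hk x Hx).
    apply exp_le. destruct (HSk k Hk). apply Rmult_le_compat_l; lra. }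
  assert (NG : forall k, (k <= n)%nat -> forall x, I01 x -> Rabs (D2G k x / DG k x) <= B).
  { intros k Hk x Hx. eapply Rle_trans. apply (nl_bound hG hG1 hG2 d L n FamG Hd0 ltac:(lra) k Hk x Hx).
    destruct (HSk k Hk). unfold B. 
    assert (exp (L * ssum d k) <= W) by (apply exp_le; apply Rmult_le_compat_l; lra).
    pose proof (exp_pos (L * ssum d k)).
    apply Rmult_le_compat; try nra. }
  assert (CMP : forall k, (k <= n)%nat -> forall eps,
    (forall x, I01 x -> Rabs (D2F k x / DF k x - D2G k x / DG k x) <= eps) ->
    forall x, I01 x ->
    Rabs (iter_comp hF k x - iter_comp hG k x) <= W * eps /\ Rabs (DF k x - DG k x) <= W * eps /\ Rabs (D2F k x - D2G k x) <= W * eps + B * (W * eps)).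
  { intros k Hk eps Heps.
    destruct (fam_basic hF g1 g2 d L n FamF k Hk) as [Fm [F0 [F1' [FD1 [FD2 Fp]]]]].
    destruct (fam_basic hG hG1 hG2 d L n FamG k Hk) as [Gm [G0 [G1' [GD1 [GD2 Gp]]]]].
    apply cmp_lemma; auto.
    all: try (rewrite F0, G0; auto); try (rewrite F1', G1'; auto).
    all: try (intros x Hx; split; [|split;[|split]]; auto). }
  assert (IND : forall k, (k <= n)%nat -> forall x, I01 x ->
    Rabs (D2F k x / DF k x - D2G k x / DG k x) <= A * ssum d k * exp (L * W * ssum d k)).
  { intro k. induction k as [|k IH]; intros Hk x Hx.
    - unfold D2F, DF, D2G, DG. simpl. replace (0 / 1 - 0 / 1) with 0 by field.
      rewrite Rabs_R0. lra.
    - destruct (fam_basic hF g1 g2 d L n FamF k ltac:(lia)) as [Fm [_ [_ [_ [_ Fp]]]]].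
      destruct (fam_basic hG hG1 hG2 d L n FamG k ltac:(lia)) as [Gm [_ [_ [_ [_ Gp]]]]].
      destruct (Zf (S k) ltac:(lia)) as [Z1 _].
      destruct (Mob_basic (N (S k))) as [_ [_ MB3]].
      set (u := iter_comp hF k x). set (v := iter_comp hG k x).
      assert (Hu : I01 u) by (apply Fm; auto). assert (Hv : I01 v) by (apply Gm; auto).
      assert (EqF : D2F (S k) x / DF (S k) x = g2 (S k) u / g1 (S k) u * DF k x + D2F k x / DF k x).
      { unfold D2F, DF. simpl. fold u. pose proof (Fp x Hx). pose proof (Z1 u Hu). field. lra. }
      assert (EqG : D2G (S k) x / DG (S k) x = hG2 (S k) v / hG1 (S k) v * DG k x + D2G k x / DG k x).
      { unfold D2G, DG. simpl. fold v. pose proof (Gp x Hx). assert (0 < hG1 (S k) v) by (apply MB3; auto). field. lra. }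
      rewrite EqF, EqG.
      set (ek := A * ssum d k * exp (L * W * ssum d k)).
      assert (IHx := IH ltac:(lia)).
      destruct (CMP k ltac:(lia) ek IHx x Hx) as [_ [C1x _]].
      set (ng := g2 (S k) u / g1 (S k) u). set (nm := hG2 (S k) v / hG1 (S k) v).
      destruct (Nf (S k) ltac:(lia)) as [_ Nf2]. assert (Nx := Nf2 u Hu). fold ng in Nx.
      destruct (Mf (S k) ltac:(lia) v Hv) as [Mx1 Mx2]. fold nm in Mx1, Mx2.
      assert (Hmk := Hmn (S k) ltac:(lia)). fold mn in Hmk. destruct (Hd (S k) ltac:(lia)) as [Hdk Hdk1].
      assert (Hpk : 0 <= Rpower (d (S k)) nu) by (unfold Rpower; left; apply exp_pos).
      assert (Hdiff : Rabs (ng - nm) <= Ka * d (S k) * mn).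
      { assert (T := Rabs_triang (ng - N (S k)) (N (S k) - nm)).
        replace (ng - N (S k) + (N (S k) - nm)) with (ng - nm) in T by ring.
        rewrite (Rabs_minus_sym ng (N (S k))), (Rabs_minus_sym (N (S k)) nm) in T.
        assert (d (S k) * Rpower (d (S k)) nu <= d (S k) * mn) by (apply Rmult_le_compat_l; lra).
        assert (0 <= C1 * C1 * E) by (apply Rmult_le_pos; [nra|lra]).
        unfold Ka. 
        assert (C0 * (d (S k) * Rpower (d (S k)) nu) <= C0 * (d (S k) * mn)) by (apply Rmult_le_compat_l; lra).
        assert (C1 * C1 * E * (d (S k) * Rpower (d (S k)) nu) <= C1 * C1 * E * (d (S k) * mn)) by (apply Rmult_le_compat_l; lra).
        replace ((C0 + C1 * C1 * E) * d (S k) * mn) with (C0 * (d (S k) * mn) + C1 * C1 * E * (d (S k) * mn)) by ring.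
        lra. }
      assert (HIk := IHx x Hx).
      assert (HDF := WF k ltac:(lia) x Hx). assert (HDFp := Fp x Hx). change (0 < DF k x) in HDFp. fold ek in HIk.
      replace (ng * DF k x + D2F k x / DF k x - (nm * DG k x + D2G k x / DG k x)) with
        ((D2F k x / DF k x - D2G k x / DG k x) + (ng - nm) * DF k x + nm * (DF k x - DG k x)) by ring.
      eapply Rle_trans. apply Rabs_triang. 
      apply Rle_trans with (ek + Ka * d (S k) * mn * W + L * d (S k) * (W * ek)).
      { assert (Q1 := Rabs_triang (D2F k x / DF k x - D2G k x / DG k x) ((ng - nm) * DF k x)).
        assert (Q2 : Rabs ((ng - nm) * DF k x) = Rabs (ng - nm) * DF k x)
          by (rewrite Rabs_mult, (Rabs_pos_eq (DF k x)); lra).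
        assert (Q3 : Rabs (nm * (DF k x - DG k x)) = Rabs nm * Rabs (DF k x - DG k x)) by apply Rabs_mult.
        rewrite Q3. rewrite Q2 in Q1.
        pose proof (Rabs_pos (ng - nm)). pose proof (Rabs_pos nm). pose proof (Rabs_pos (DF k x - DG k x)).
        assert (Rabs (ng - nm) * DF k x <= Ka * d (S k) * mn * W) by (apply Rmult_le_compat; lra).
        assert (Rabs nm * Rabs (DF k x - DG k x) <= L * d (S k) * (W * ek)) by (apply Rmult_le_compat; lra).
        lra. }
      unfold ek. simpl ssum.
      set (S0 := ssum d k). set (dk := d (S k)).
      assert (HS0 : 0 <= S0) by (apply (HSk k ltac:(lia))).
      set (X := exp (L * W * S0)). set (Y := exp (L * W * dk)).
      assert (HXY : exp (L * W * (S0 + dk)) = X * Y) by (unfold X, Y; rewrite <- exp_plus; f_equal; ring).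
      rewrite HXY.
      assert (HX : 1 <= X) by (unfold X; rewrite <- exp_0; apply exp_le; apply Rmult_le_pos; [nra|lra]).
      assert (HY : 1 + L * W * dk <= Y) by (unfold Y; apply exp_ineq1_le).
      assert (HLW : 0 <= L * W * dk) by (apply Rmult_le_pos; [nra|unfold dk; lra]).
      assert (Hek : 0 <= A * S0 * X) by (apply Rmult_le_pos; [apply Rmult_le_pos|]; lra).
      assert (E1 : A * S0 * X * (1 + L * W * dk) <= A * S0 * X * Y) by (apply Rmult_le_compat_l; lra).
      assert (E2 : A * dk <= A * dk * (X * Y)).
      { assert (1 <= X * Y) by nra. assert (0 <= A * dk) by (apply Rmult_le_pos; unfold dk; lra). nra. }
      replace (Ka * dk * mn * W) with (A * dk) by (unfold A; ring).
      replace (A * S0 * X + A * dk + L * dk * (W * (A * S0 * X))) with (A * S0 * X * (1 + L * W * dk) + A * dk) by ring.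
      replace (A * (S0 + dk) * (X * Y)) with (A * S0 * X * Y + A * dk * (X * Y)) by ring.
      lra. }
  destruct (fam_basic hF g1 g2 d L n FamF n (le_n n)) as [Fm [F0 [F1' [FD1 [FD2 Fp]]]]].
  destruct (fam_basic hG hG1 hG2 d L n FamG n (le_n n)) as [Gm [G0 [G1' [GD1 [GD2 Gp]]]]].
  assert (DF1 := deriv01_Dv _ _ HF1). assert (DF2 := deriv01_Dv _ _ HF2).
  assert (DG1 := deriv01_Dv _ _ HG1). assert (DG2 := deriv01_Dv _ _ HG2).
  assert (eF1 : forall x, I01 x -> F1 x = DF n x) by (intros x Hx; exact (Dv_unique _ _ _ DF1 FD1 x Hx)).
  assert (eG1 : forall x, I01 x -> G1 x = DG n x) by (intros x Hx; exact (Dv_unique _ _ _ DG1 GD1 x Hx)).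
  assert (eF2 : forall x, I01 x -> F2 x = D2F n x).
  { intros x Hx. apply (Dv_unique F1 F2 (D2F n) DF2); auto.
    eapply Dv_ext. apply FD2. intros; symmetry; auto. intros; reflexivity. }
  assert (eG2 : forall x, I01 x -> G2 x = D2G n x).
  { intros x Hx. apply (Dv_unique G1 G2 (D2G n) DG2); auto.
    eapply Dv_ext. apply GD2. intros; symmetry; auto. intros; reflexivity. }
  set (eps := A * ssum d n * exp (L * W * ssum d n)).
  assert (Heps : eps <= A * C2 * exp (L * W * C2)).
  { unfold eps. destruct (HSk n (le_n n)). assert (0 <= A * ssum d n) by (apply Rmult_le_pos; lra).
    assert (exp (L * W * ssum d n) <= exp (L * W * C2)) by (apply exp_le; apply Rmult_le_compat_l; [nra|lra]).
    pose proof (exp_pos (L * W * ssum d n)).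
    apply Rmult_le_compat; try lra. apply Rmult_le_compat_l; lra. }
  assert (Hfin : forall x, I01 x ->
    Rabs (iter_comp hF n x - iter_comp hG n x) <= W * eps /\ Rabs (F1 x - G1 x) <= W * eps /\ Rabs (F2 x - G2 x) <= W * eps + B * (W * eps)).
  { apply (cmp_lemma (iter_comp hF n) F1 F2 (iter_comp hG n) G1 G2 W eps B DF1 DF2 DG1 DG2).
    all: try (rewrite F0, G0; reflexivity).
    all: try (rewrite F1', G1'; reflexivity).
    all: try (intros x Hx; rewrite eF1, eG1 by auto; split; [|split;[|split]]; auto; [apply WF; lia| apply WG; lia]).
    all: try (intros x Hx; rewrite eF1, eG1, eF2, eG2 by auto; apply IND; auto).
    all: try (intros x Hx; rewrite eG1, eG2 by auto; apply NG; auto).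
    all: intros x Hx; rewrite (eF1 x Hx), (eG1 x Hx);
      split; [apply Fp; auto| split; [apply Gp; auto| split; [apply (WF n (le_n n) x Hx) | apply (WG n (le_n n) x Hx)]]]. }
  destruct (sup_exists (fun x => iter_comp hF n x - iter_comp hG n x) (W * eps)) as [s0 [Hs0 Hs0b]].
  { intros x Hx. apply (Hfin x Hx). }
  destruct (sup_exists (fun x => F1 x - G1 x) (W * eps)) as [s1 [Hs1 Hs1b]].
  { intros x Hx. apply (Hfin x Hx). }
  destruct (sup_exists (fun x => F2 x - G2 x) (W * eps + B * (W * eps))) as [s2 [Hs2 Hs2b]].
  { intros x Hx. apply (Hfin x Hx). }
  exists (s0 + s1 + s2). split.
  - exists s0, s1, s2. split; [exact Hs0|split;[exact Hs1|split;[exact Hs2|reflexivity]]].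
  - fold d. fold m. fold mn.
    assert (HepsA : 0 <= eps) by (unfold eps; destruct (HSk n (le_n n)); pose proof (exp_pos (L * W * ssum d n)); apply Rmult_le_pos; [apply Rmult_le_pos|]; lra).
    apply Rle_trans with ((3 * W + B * W) * eps).
    { assert (B * (W * eps) = B * W * eps) by ring. nra. }
    replace ((3 * W + B * W) * (Ka * W * C2 * exp (L * W * C2)) * mn)
       with ((3 * W + B * W) * (A * C2 * exp (L * W * C2))) by (unfold A; ring).
    apply Rmult_le_compat_l; [nra|exact Heps].
Qed.
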